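(* Let $G$ be a finite digraph without sources that has a good quasi-kernel. Then $G$ has a quasi-kernel with at most $|V(G)|/2$ vertices.
   Context: Digraphs are finite, without loops and without multiple edges in the same direction; anti-parallel edges are allowed. For $V'\subseteq V(G)$, $\Gamma^+(V')$ is the set of out-neighbours of vertices of $V'$, $\Gamma^+_2(V')=V'\cup\Gamma^+(V')\cup\Gamma^+(\Gamma^+(V'))$. A source is a vertex of in-degree $0$. A quasi-kernel is an independent set $Q$ with $\Gamma^+_2(Q)=V(G)$. A quasi-kernel $Q$ is good if $Q\subseteq\Gamma^+(\Gamma^+(Q))$. *)

(* Defs.v *)
From mathcomp Require Import all_boot.
Set Implicit Arguments. Unset Strict Implicit. Unset Printing Implicit Defensive.

(* A finite digraph: vertex set a finType T, arc relation e : rel T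
   (e x y means there is an arc x -> y). Being a relation, there are no
   multiple arcs in the same direction; anti-parallel arcs are allowed.
   Loops are excluded by the hypothesis [irreflexive e]. *)

Definition outN (T : finType) (e : rel T) (A : {set T}) : {set T} :=
  [set y | [exists x in A, e x y]].

Definition outN2 (T : finType) (e : rel T) (A : {set T}) : {set T} :=
  A :|: outN e A :|: outN e (outN e A).

Definition is_source (T : finType) (e : rel T) (v : T) : bool :=
  [forall u, ~~ e u v].

Definition independent (T : finType) (e : rel T) (Q : {set T}) : bool :=
  [forall x in Q, forall y in Q, ~~ e x y].

Definition quasi_kernel (T : finType) (e : rel T) (Q : {set T}) : bool :=
  independent e Q && (outN2 e Q == [set: T]).

Definition good_quasi_kernel (T : finType) (e : rel T) (Q : {set T}) : bool :=
  quasi_kernel e Q && (Q \subset outN e (outN e Q)).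

(* Main.v *)
Require Import Defs.
From mathcomp Require Import all_boot zify.
Set Implicit Arguments. Unset Strict Implicit. Unset Printing Implicit Defensive.

Lemma outN_mono (T : finType) (e : rel T) (A A' : {set T}) :
  A \subset A' -> outN e A \subset outN e A'.
Proof.
move=> sub; apply/subsetP=> y; rewrite !inE => /existsP [x /andP [xA exy]].
by apply/existsP; exists x; rewrite (subsetP sub) // exy.
Qed.

Lemma indep_sub (T : finType) (e : rel T) (A A' : {set T}) :
  A \subset A' -> independent e A' -> independent e A.
Proof.
move=> sub /forallP H; apply/forallP=> x; apply/implyP=> xA.
apply/forallP=> y; apply/implyP=> yA.
have := H x; rewrite (subsetP sub) //= => /forallP /(_ y).
by rewrite (subsetP sub).
Qed.

Theorem mainTheorem3 (T : finType) (e : rel T) :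
  irreflexive e ->
  (forall v : T, ~~ is_source e v) ->
  (exists Q : {set T}, good_quasi_kernel e Q) ->
  exists Q : {set T}, quasi_kernel e Q /\ 2 * #|Q| <= #|T|.
Proof.
move=> _ _ [Q /andP [/andP [indQ /eqP covQ] goodQ]].
set S := outN e Q.
have disj : Q :&: S = set0.
  apply/setP=> y; rewrite !inE; apply/negbTE/negP=> /andP [yQ].
  case/existsP=> x /andP [xQ exy].
  move/forallP: indQ => /(_ x); rewrite xQ /= => /forallP /(_ y).
  by rewrite yQ exy.
have cardQS : #|Q| + #|S| <= #|T|.
  by rewrite -cardsUI disj cards0 addn0 max_card.
pose f (s : T) := odflt s [pick x in Q | e x s].
set B := f @: S.
have fP s : s \in S -> f s \in Q /\ e (f s) s.
  rewrite inE => /existsP [x /andP [xQ exs]].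
  rewrite /f; case: pickP => [y /andP [yQ eys] | /(_ x)] /=.
    by [].
  by rewrite xQ exs.
have BQ : B \subset Q.
  by apply/subsetP=> y /imsetP [s sS ->]; case: (fP s sS).
have SB : S \subset outN e B.
  apply/subsetP=> s sS; rewrite inE; apply/existsP; exists (f s).
  case: (fP s sS) => _ ->; rewrite andbT; exact: imset_f.
have SSB := outN_mono e SB.
have qkB : quasi_kernel e B.
  rewrite /quasi_kernel (indep_sub BQ indQ) /=; apply/eqP/setP=> v.
  rewrite in_setT; have : v \in outN2 e Q by rewrite covQ inE.
  rewrite /outN2 !in_setU -/S => /orP [/orP [vQ | vS] | vSS].
  - by rewrite (subsetP SSB) ?orbT // (subsetP goodQ).
  - by rewrite (subsetP SB) ?orbT.
  - by rewrite (subsetP SSB) ?orbT.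
case: (leqP (2 * #|Q|) #|T|) => h.
  by exists Q; split=> //; rewrite /quasi_kernel indQ covQ eqxx.
exists B; split=> //.
have cB : #|B| <= #|S| by apply: leq_imset_card.
lia.
Qed.
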